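(* Let $n\ge 1$ and $\psi,\eta\in(0,1)^n$. Let $Y\in\{0,1\}$ be a random bit with $\mathbb{P}(Y=1)=\mathbb{P}(Y=0)=1/2$, and conditionally on $Y$ let $X_1,\ldots,X_n\in\{0,1\}$ be independent with $\mathbb{P}(X_i=1\mid Y=1)=\psi_i$ and $\mathbb{P}(X_i=0\mid Y=0)=\eta_i$. Let $f^{\mathrm{OPT}}:\{0,1\}^n\to\{0,1\}$ be a decision rule minimizing $\mathbb{P}(f(X)\neq Y)$ over all $f:\{0,1\}^n\to\{0,1\}$, where $X=(X_1,\ldots,X_n)$. Then, with $\pi_i=(\psi_i+\eta_i)/2$, $$\mathbb{P}(f^{\mathrm{OPT}}(X)\neq Y)\le\frac12\sqrt{\prod_{i=1}^n(\psi_i+\eta_i)(2-\psi_i-\eta_i)}=\frac12\cdot 2^n\sqrt{\prod_{i=1}^n\pi_i(1-\pi_i)} .$$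
   Context: $\pi_i=(\psi_i+\eta_i)/2$ is called the balanced accuracy of expert $i$; $\psi_i$ is its sensitivity and $\eta_i$ its specificity. *)

(* Defs.v *)
From HB Require Import structures.
From mathcomp Require Import all_boot all_order all_algebra.
Set Implicit Arguments. Unset Strict Implicit. Unset Printing Implicit Defensive.
Import Order.TTheory GRing.Theory Num.Theory.
Local Open Scope ring_scope.

Section Experts.
Variables (R : rcfType) (n : nat) (psi eta : 'I_n -> R).

Definition cond_prob (y : bool) (i : 'I_n) (b : bool) : R :=
  if y then (if b then psi i else 1 - psi i)
  else (if b then 1 - eta i else eta i).

(* Joint law: P(Y = y, X = x) = 1/2 * prod_i P(X_i = x_i | Y = y),
   i.e. Y uniform and X_1..X_n conditionally independent given Y. *)
Definition joint (y : bool) (x : {ffun 'I_n -> bool}) : R :=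
  2^-1 * \prod_(i < n) cond_prob y i (x i).

Definition err (f : {ffun 'I_n -> bool} -> bool) : R :=
  \sum_(x : {ffun 'I_n -> bool}) \sum_(y : bool | f x != y) joint y x.

Definition bal_acc (i : 'I_n) : R := (psi i + eta i) / 2.

End Experts.

(* Main.v *)
Require Import Defs.
From HB Require Import structures.
From mathcomp Require Import all_boot all_order all_algebra.
From mathcomp Require Import ring lra.
Import Order.TTheory GRing.Theory Num.Theory.
Local Open Scope ring_scope.

Lemma cond_prob_ge0 (R : rcfType) (n : nat) (psi eta : 'I_n -> R)
  (hpsi : forall i, 0 < psi i < 1) (heta : forall i, 0 < eta i < 1) y i b :
  0 <= cond_prob psi eta y i b.
Proof.
have := hpsi i; have := heta i; move=> /andP[? ?] /andP[? ?].
rewrite /cond_prob; case: y; case: b; lra.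
Qed.

Lemma step_i (R : rcfType) (a b : R) : 0 < a < 1 -> 0 < b < 1 ->
  (Num.sqrt (a * (1 - b)) + Num.sqrt ((1 - a) * b)) ^+ 2
    <= (a + b) * (2 - a - b).
Proof.
move=> /andP[a0 a1] /andP[b0 b1].
set X := Num.sqrt (a * (1 - b)); set Y := Num.sqrt ((1 - a) * b).
set p := Num.sqrt (a * (1 - a)); set q := Num.sqrt (b * (1 - b)).
have hX : X ^+ 2 = a * (1 - b) by rewrite sqr_sqrtr //; nra.
have hY : Y ^+ 2 = (1 - a) * b by rewrite sqr_sqrtr //; nra.
have hp : p ^+ 2 = a * (1 - a) by rewrite sqr_sqrtr //; nra.
have hq : q ^+ 2 = b * (1 - b) by rewrite sqr_sqrtr //; nra.
have hXY : X * Y = p * q.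
  rewrite /X /Y /p /q -!sqrtrM; try nra.
  congr Num.sqrt; ring.
have : 0 <= (p - q) ^+ 2 by rewrite sqr_ge0.
rewrite !expr2 in hX hY hp hq * => h.
nra.
Qed.

Lemma min_le (R : rcfType) (u v S : R) : 0 <= u -> u <= v -> 0 <= S ->
  S ^+ 2 = u * v -> u <= S.
Proof.
move=> u0 uv S0 hS.
have : u ^+ 2 <= S ^+ 2 by rewrite hS expr2 ler_wpM2l.
rewrite !expr2 => h; nra.
Qed.

Theorem theorem2 (R : rcfType) (n : nat) (psi eta : 'I_n -> R)
  (hn : (1 <= n)%N)
  (hpsi : forall i, 0 < psi i < 1) (heta : forall i, 0 < eta i < 1)
  (fopt : {ffun 'I_n -> bool} -> bool)
  (hopt : forall f : {ffun 'I_n -> bool} -> bool, err psi eta fopt <= err psi eta f) :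
  err psi eta fopt
    <= 2^-1 * Num.sqrt (\prod_(i < n) ((psi i + eta i) * (2 - psi i - eta i)))
  /\ 2^-1 * Num.sqrt (\prod_(i < n) ((psi i + eta i) * (2 - psi i - eta i)))
     = 2^-1 * 2 ^+ n * Num.sqrt (\prod_(i < n) (bal_acc psi eta i * (1 - bal_acc psi eta i))).
Proof.
have cp0 := @cond_prob_ge0 R n psi eta hpsi heta.
have j0 : forall y x, 0 <= joint psi eta y x.
  move=> y x; rewrite /joint mulr_ge0 ?invr_ge0 ?ler0n //.
  by apply: prodr_ge0 => i _.
split.
- pose fmap x := (joint psi eta false x <= joint psi eta true x).
  apply: le_trans (hopt fmap) _.
  pose S (x : {ffun 'I_n -> bool}) := 2^-1 * \prod_(i < n)
     Num.sqrt (cond_prob psi eta true i (x i) * cond_prob psi eta false i (x i)).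
  have S0 : forall x, 0 <= S x.
    move=> x; rewrite /S mulr_ge0 ?invr_ge0 ?ler0n //.
    by apply: prodr_ge0 => i _; exact: sqrtr_ge0.
  have S2 : forall x, S x ^+ 2 = joint psi eta true x * joint psi eta false x.
    move=> x; rewrite /S /joint exprMn -prodrXl.
    rewrite (eq_bigr (fun i => cond_prob psi eta true i (x i) *
                               cond_prob psi eta false i (x i))); last first.
      by move=> i _; rewrite sqr_sqrtr // mulr_ge0.
    rewrite big_split /=; ring.
  apply: (@le_trans _ _ (\sum_x S x)).
    apply: ler_sum => x _.
    rewrite big_mkcond big_bool /= /fmap.
    have := S0 x; have := S2 x; have := j0 true x; have := j0 false x.
    move=> jf jt hS S0x.
    case: (lerP (joint psi eta false x) (joint psi eta true x)) => h /=; rewrite ?add0r ?addr0.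
      by apply: (min_le _ _ _ _ jf h S0x); rewrite hS mulrC.
    by apply: (min_le _ _ _ _ jt (ltW h) S0x); rewrite hS.
  rewrite /S -mulr_sumr ler_pM2l ?invr_gt0 ?ltr0n //.
  rewrite -(bigA_distr_bigA (fun i b => Num.sqrt (cond_prob psi eta true i b * cond_prob psi eta false i b))) /=.
  rewrite (eq_bigr (fun i => Num.sqrt (psi i * (1 - eta i)) + Num.sqrt ((1 - psi i) * eta i))); last by move=> i _; rewrite big_bool.
  rewrite -[X in X <= _]ger0_norm; last by apply: prodr_ge0 => i _; rewrite addr_ge0 ?sqrtr_ge0.
  rewrite -sqrtr_sqr -prodrXl ler_sqrt; last first.
    apply: prodr_ge0 => i _; have := hpsi i; have := heta i.
    move=> /andP[? ?] /andP[? ?]; nra.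
  apply: ler_prod => i _; apply/andP; split; first exact: sqr_ge0.
  exact: step_i.
- rewrite (eq_bigr (fun i => 2 ^+ 2 * (bal_acc psi eta i * (1 - bal_acc psi eta i)))); last first.
    by move=> i _; rewrite /bal_acc; field.
  rewrite big_split /= prodr_const card_ord -exprM mulnC exprM sqrtrM ?exprn_ge0 ?ler0n //.
  by rewrite sqrtr_sqr ger0_norm ?exprn_ge0 ?ler0n // mulrA.
Qed.
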